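(* (1) For each $p\ge 3$ there is an instance with $p$ binary attributes and $k=2$ such that the set of committees optimal for $\|\cdot\|_1$ and the set of committees optimal for $\|\cdot\|_{\max}$ are disjoint. (2) For each $p\ge 3$ there is an instance with $p$ attributes such that the set of committees optimal for $\|\cdot\|_{\max}$ and the set of committees optimal for $\|\cdot\|_{1,\max}$ are disjoint. (3) For each $p\ge 2$ there is an instance with $p$ attributes, at least one of which has a domain with $4$ values, such that the set of committees optimal for $\|\cdot\|_1$ and the set of committees optimal for $\|\cdot\|_{1,\max}$ are disjoint. (4) There is an instance with $p=2$ binary attributes such that the set of committees optimal for $\|\cdot\|_1$ differs from the set of committees optimal for $\|\cdot\|_{\max}$.
   Context: An instance consists of attributes $X_1,\dots,X_p$, each $X_i$ with finite domain $D_i=\{x_i^1,\dots,x_i^{q_i}\}$ (binary means $|D_i|=2$); a candidate database, i.e. a finite set $C$ in which each candidate $c$ has a value vector $(X_1(c),\dots,X_p(c))\in D_1\times\dots\times D_p$ (different candidates may share a vector); a target distribution $\pi=(\pi_1,\dots,\pi_p)$ with $\pi_i=(\pi_i^1,\dots,\pi_i^{q_i})$ nonnegative reals summing to $1$; and an integer $k\in\{1,\dots,|C|\}$. For $A\subseteq C$ with $|A|=k$, $r_i^j(A)=|\{c\in A: X_i(c)=x_i^j\}|/k$. Loss functions: $\|\pi,r(A)\|_1=\sum_{i,j}|r_i^j(A)-\pi_i^j|$; $\|\pi,r(A)\|_{1,\max}=\sum_i\max_j|r_i^j(A)-\pi_i^j|$; $\|\pi,r(A)\|_{\max}=\max_{i,j}|r_i^j(A)-\pi_i^j|$.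 A committee of size $k$ is optimal for a loss $f$ if it minimizes $f(\pi,r(A))$ over all $k$-element subsets of $C$. *)

(* Defs.v *)
From HB Require Import structures.
From mathcomp Require Import all_boot all_order all_algebra.
From mathcomp Require Import reals.
Import Order.TTheory GRing.Theory Num.Theory.
Local Open Scope ring_scope.

(* An instance with p attributes X_0..X_{p-1}; attribute i has domain
   'I_(q i) (values x_i^1..x_i^{q i} are indexed 0..q i - 1); the candidate
   database is 'I_ncand (candidates may share value vectors); X i c is the
   value of attribute i for candidate c; target is the target distribution pi;
   k the committee size with 1 <= k <= |C|. *)
Record instance (R : realFieldType) (p : nat) := Instance {
  q : 'I_p -> nat;
  ncand : nat;
  X : forall i : 'I_p, 'I_ncand -> 'I_(q i);
  target : forall i : 'I_p, 'I_(q i) -> R;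
  target_ge0 : forall i j, 0 <= target i j;
  target_sum1 : forall i, \sum_(j < q i) target i j = 1;
  k : nat;
  k_ge1 : (1 <= k)%N;
  k_le : (k <= ncand)%N
}.

Arguments q {R p}.
Arguments ncand {R p}.
Arguments X {R p} _ _ _.
Arguments target {R p} _ _ _.
Arguments k {R p}.

Section Losses.
Variables (R : realFieldType) (p : nat) (I : instance R p).

Definition ratio (A : {set 'I_(ncand I)}) (i : 'I_p) (j : 'I_(q I i)) : R :=
  (#|[set c in A | X I i c == j]|)%:R / (k I)%:R.

Definition dev A i j : R := `|ratio A i j - target I i j|.

Definition loss1 A : R := \sum_(i < p) \sum_(j < q I i) dev A i j.
(* ||target, r(A)||_{1,max}  (max of nonnegative reals, 0 as neutral) *)
Definition loss1max A : R :=
  \sum_(i < p) \big[Num.max/0]_(j < q I i) dev A i j.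
Definition lossmax A : R :=
  \big[Num.max/0]_(i < p) \big[Num.max/0]_(j < q I i) dev A i j.

Definition is_committee (A : {set 'I_(ncand I)}) : Prop := #|A| = k I.

Definition optimal (f : {set 'I_(ncand I)} -> R) (A : {set 'I_(ncand I)}) : Prop :=
  is_committee A /\ forall B, is_committee B -> f A <= f B.

Definition binary_instance : Prop := forall i, q I i = 2%N.
End Losses.

Arguments ratio {R p} I A i j.
Arguments dev {R p} I A i j.
Arguments loss1 {R p} I A.
Arguments loss1max {R p} I A.
Arguments lossmax {R p} I A.
Arguments is_committee {R p} I A.
Arguments optimal {R p} I f A.
Arguments binary_instance {R p} I.

(* Main.v *)
Require Import Defs.
From HB Require Import structures.
From mathcomp Require Import all_boot all_order all_algebra.
From mathcomp Require Import reals.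
From mathcomp Require Import lra zify.
Import Order.TTheory GRing.Theory Num.Theory.
Local Open Scope ring_scope.

Definition c2 : 'I_3 := @Ordinal 3 2 isT.

Lemma card_sum3 (B : {set 'I_3}) : #|B| = (\sum_(i < 3) (i \in B))%N.
Proof. rewrite -sum1_card big_mkcond /=; apply: eq_bigr => i _; by case: (i \in B). Qed.

Lemma cnt (A : {set 'I_3}) (P : nat -> bool) : #|A| = 2%N -> P 0%N = P 1%N ->
  #|[set c in A | P (val c)]| = (((c2 \in A) && P 2%N) + (2 - (c2 \in A)) * P 0%N)%N.
Proof.
move=> hA hP; move: hA; rewrite !card_sum3 !big_ord_recl !big_ord0 /=.
have -> : lift ord0 (lift ord0 (@ord0 0)) = c2 by apply: val_inj.
rewrite !inE /= -hP.
case: (ord0 \in A); case: (lift ord0 (@ord0 1) \in A); case: (c2 \in A); case: (P 0%N); case: (P 2%N) => //=; idtac.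
Qed.

Section S.
Context {R : realType}.

Definition tgt1 (p : nat) (i : 'I_p) (j : 'I_2) : R :=
  if val i == 0%N then (if val j == 1%N then 1 else 0) else (if val j == 0%N then 1 else 0).
Lemma tgt1_ge0 p i j : 0 <= tgt1 p i j.
Proof. rewrite /tgt1; by repeat case: ifP. Qed.
Lemma tgt1_sum p i : \sum_(j < 2) tgt1 p i j = 1.
Proof. rewrite !big_ord_recl big_ord0 /tgt1 /=; case: ifP => _ /=; rewrite ?addr0 ?add0r //. Qed.

Definition inst1 p : instance R p :=
  @Instance R p (fun _ => 2%N) 3 (fun i c => if val c == 2%N then ord_max else ord0)
    (tgt1 p) (@tgt1_ge0 p) (@tgt1_sum p) 2 isT isT.

Lemma absE (x v : R) : 0 <= v -> (x = v \/ x = - v) -> `|x| = v.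
Proof. by move=> h [->|->]; rewrite ?normrN ger0_norm. Qed.

Lemma dev1 p (A : {set 'I_3}) i j : #|A| = 2%N ->
  dev (inst1 p) A i j = if c2 \in A then 1/2 else (if val i == 0%N then 1 else 0).
Proof.
move=> hA; rewrite /dev /Defs.ratio /=; change 'I_2 in j.
have := @cnt A (fun n => (if n == 2%N then ord_max else ord0) == j) hA erefl.
rewrite /= => ->.
rewrite /tgt1; case: (c2 \in A); case: j => [[|[|]]] //= _; rewrite ?subn0 ?subn1 ?muln1 ?muln0 ?add0n ?addn0 /=; case: (val i == 0%N) => /=;
  apply: absE; try lra.
all: try (left; lra); try (right; lra).
Qed.

Lemma bigmax_cst n (c : R) : 0 <= c -> \big[Num.max/0]_(j < n.+1) c = c.
Proof. move=> c0; apply/le_anti; rewrite bigmax_le //=. exact: (le_bigmax _ (fun=> c) ord0). Qed.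

Lemma loss1_1 p (A : {set 'I_3}) : #|A| = 2%N ->
  loss1 (inst1 p.+1) A = if c2 \in A then p.+1%:R else 2.
Proof.
move=> hA; rewrite /loss1.
under eq_bigr => i _ do under eq_bigr => j _ do rewrite dev1 //.
case: (c2 \in A) => /=.
  rewrite sumr_const card_ord sumr_const card_ord -mulr_natr -mulr_natr; lra.
rewrite big_ord_recl /= [X in _ + X]big1 => [|i _].
  by rewrite sumr_const card_ord addr0.
by rewrite sumr_const mul0rn.
Qed.

Lemma lossmax_1_le p (A : {set 'I_3}) : #|A| = 2%N -> c2 \in A ->
  lossmax (inst1 p) A <= 1/2.
Proof.
move=> hA hc; rewrite /lossmax; apply: bigmax_le => [|i _]; first lra.
apply: bigmax_le => [|j _]; first lra.
by rewrite dev1 // hc.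
Qed.

Lemma lossmax_1_ge p (A : {set 'I_3}) : #|A| = 2%N -> c2 \notin A ->
  1 <= lossmax (inst1 p.+1) A.
Proof.
move=> hA hc; rewrite /lossmax.
apply: le_trans (le_bigmax _ _ ord0).
apply: le_trans (le_bigmax _ _ ord0).
by rewrite dev1 // (negbTE hc).
Qed.

Lemma loss1max_1_le p (A : {set 'I_3}) : #|A| = 2%N -> c2 \notin A ->
  loss1max (inst1 p.+1) A <= 1.
Proof.
move=> hA hc; rewrite /loss1max big_ord_recl big1 /=.
  rewrite addr0; apply: bigmax_le => [|j _]; first lra.
  by rewrite dev1 // (negbTE hc).
move=> i _; apply/le_anti/andP; split; last first.
  apply: le_trans (le_bigmax _ _ ord0); exact: normr_ge0.
apply: (@bigmax_le _ _ _ _ _ 0 0) => [//|j _].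
by rewrite dev1 // (negbTE hc) /=.
Qed.

Lemma loss1max_1_ge p (A : {set 'I_3}) : #|A| = 2%N -> c2 \in A ->
  p%:R / 2 <= loss1max (inst1 p) A.
Proof.
move=> hA hc; rewrite /loss1max.
apply: (@le_trans _ _ (\sum_(i < p) (1/2 : R))).
  rewrite sumr_const card_ord -mulr_natr; lra.
apply: ler_sum => i _.
apply: le_trans (le_bigmax _ _ ord0).
by rewrite dev1 // hc.
Qed.

Definition o4 (n : nat) (h : (n < 4)%N) : 'I_4 := Ordinal h.

Definition X3 p (i : 'I_p) (c : 'I_3) : 'I_4 :=
  if val c == 2%N then (if val i == 0%N then @o4 3 isT else @o4 0 isT)
  else (if (val i <= 1)%N then @o4 1 isT else @o4 0 isT).

Definition tgt3 p (i : 'I_p) (j : 'I_4) : R :=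
  if val i == 0%N then nth 0 [:: 1/2; 1/4; 1/4; 0] j
  else if val i == 1%N then nth 0 [:: 3/16; 13/16; 0; 0] j
  else nth 0 [:: 1; 0; 0; 0] j.

Lemma tgt3_ge0 p i j : 0 <= tgt3 p i j.
Proof. rewrite /tgt3; case: j => [[|[|[|[|]]]]] //= _; repeat case: ifP => _; lra. Qed.
Lemma tgt3_sum p i : \sum_(j < 4) tgt3 p i j = 1.
Proof. rewrite !big_ord_recl big_ord0 /tgt3 /=; repeat case: ifP => _ /=; lra. Qed.

Definition inst3 p : instance R p :=
  @Instance R p (fun _ => 4%N) 3 (@X3 p) (tgt3 p) (@tgt3_ge0 p) (@tgt3_sum p) 2 isT isT.

Definition dv3 (b : bool) (i j : nat) : R :=
  if i == 0%N then (if b then nth 0 [:: 1/2; 1/4; 1/4; 1/2] j else nth 0 [:: 1/2; 3/4; 1/4; 0] j)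
  else if i == 1%N then (if b then nth 0 [:: 5/16; 5/16; 0; 0] j else nth 0 [:: 3/16; 3/16; 0; 0] j)
  else 0.

Lemma dev3 p (A : {set 'I_3}) i j : #|A| = 2%N ->
  dev (inst3 p) A i j = dv3 (c2 \in A) i j.
Proof.
move=> hA; rewrite /dev /Defs.ratio /=; change 'I_4 in j.
rewrite /X3.
have := @cnt A (fun n => (if n == 2%N then (if val i == 0%N then @o4 3 isT else @o4 0 isT)
  else (if (val i <= 1)%N then @o4 1 isT else @o4 0 isT)) == j) hA erefl.
rewrite /= => ->.
rewrite /tgt3 /dv3; case: (c2 \in A); case: j => [[|[|[|[|]]]]] //= hj;
  rewrite ?subn0 ?subn1 ?muln1 ?muln0 ?add0n ?addn0 /=; case: (nat_of_ord i) => [|[|ii]] /=;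
  apply: absE; try lra.
all: try (left; lra); try (right; lra).
Qed.

Lemma loss1_3 p (A : {set 'I_3}) : #|A| = 2%N ->
  loss1 (inst3 p.+2) A = if c2 \in A then 17/8 else 15/8.
Proof.
move=> hA; rewrite /loss1.
under eq_bigr => i _ do under eq_bigr => j _ do rewrite dev3 //.
rewrite big_ord_recl big_ord_recl [X in _ + (_ + X)]big1 => [|i _]; last first.
  by rewrite big1 // => j _; rewrite /dv3 !lift0.
rewrite !big_ord_recl !big_ord0 /dv3 /=; case: (c2 \in A); lra.
Qed.

Lemma bigmax0 n (F : 'I_n.+1 -> R) : (forall j, F j = 0) -> \big[Num.max/0]_(j < n.+1) F j = 0.
Proof. by move=> h; rewrite (eq_bigr (fun _ => 0)) ?bigmax_cst. Qed.

Lemma loss1max_3_le p (A : {set 'I_3}) : #|A| = 2%N -> c2 \in A ->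
  loss1max (inst3 p.+2) A <= 13/16.
Proof.
move=> hA hc; rewrite /loss1max.
rewrite big_ord_recl big_ord_recl [X in _ + (_ + X)]big1 => [|i _]; last first.
  by apply: bigmax0 => j; rewrite dev3 // /dv3 !lift0.
have h0 : \big[Num.max/0]_(j < 4) dev (inst3 p.+2) A ord0 j <= 1/2.
  apply: bigmax_le => [|j _]; first lra.
  rewrite dev3 // hc /dv3 /=; case: j => [[|[|[|[|]]]]] //= _; lra.
have h1 : \big[Num.max/0]_(j < 4) dev (inst3 p.+2) A (lift ord0 ord0) j <= 5/16.
  apply: bigmax_le => [|j _]; first lra.
  rewrite dev3 // hc /dv3 /=; case: j => [[|[|[|[|]]]]] //= _; lra.
lra.
Qed.

Lemma loss1max_3_ge p (A : {set 'I_3}) : #|A| = 2%N -> c2 \notin A ->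
  15/16 <= loss1max (inst3 p.+2) A.
Proof.
move=> hA hc; rewrite /loss1max.
rewrite big_ord_recl big_ord_recl [X in _ + (_ + X)]big1 => [|i _]; last first.
  by apply: bigmax0 => j; rewrite dev3 // /dv3 !lift0.
have h0 : 3/4 <= \big[Num.max/0]_(j < 4) dev (inst3 p.+2) A ord0 j.
  apply: le_trans (le_bigmax _ _ (@o4 1 isT)).
  rewrite dev3 // (negbTE hc) /dv3 /=; lra.
have h1 : 3/16 <= \big[Num.max/0]_(j < 4) dev (inst3 p.+2) A (lift ord0 ord0) j.
  apply: le_trans (le_bigmax _ _ ord0).
  rewrite dev3 // (negbTE hc) /dv3 /=; lra.
lra.
Qed.
End S.

Definition B0 : {set 'I_3} := [set ord0; @Ordinal 3 1 isT].
Definition B1 : {set 'I_3} := [set ord0; c2].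
Lemma hB0 : #|B0| = 2%N. Proof. by rewrite cards2. Qed.
Lemma hB1 : #|B1| = 2%N. Proof. by rewrite cards2. Qed.
Lemma cB0 : c2 \notin B0. Proof. by rewrite !inE. Qed.
Lemma cB1 : c2 \in B1. Proof. by rewrite !inE eqxx orbT. Qed.

Theorem proposition2 (R : realType) :
  (* (1) *)
  (forall p : nat, (3 <= p)%N ->
    exists I : instance R p, binary_instance I /\ k I = 2%N /\
      forall A, ~ (optimal I (loss1 I) A /\ optimal I (lossmax I) A)) /\
  (* (2) *)
  (forall p : nat, (3 <= p)%N ->
    exists I : instance R p,
      forall A, ~ (optimal I (lossmax I) A /\ optimal I (loss1max I) A)) /\
  (* (3) *)
  (forall p : nat, (2 <= p)%N ->
    exists I : instance R p, (exists i, q I i = 4%N) /\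
      forall A, ~ (optimal I (loss1 I) A /\ optimal I (loss1max I) A)) /\
  (* (4) *)
  (exists I : instance R 2, binary_instance I /\
      exists A, ~ (optimal I (loss1 I) A <-> optimal I (lossmax I) A)).
Proof.
split; [|split; [|split]].
- case=> [|[|[|p]]] // _.
  exists (@inst1 R p.+3); split; first by []; split; first by [].
  move=> A [[hA o1] [_ om]].
  have h3 : (3 : R) <= p.+3%:R by rewrite ler_nat.
  case hc: (c2 \in A).
    have := o1 B0 hB0; rewrite !loss1_1 // ?hB0 // hc (negbTE cB0); lra.
  have := om B1 hB1.
  have := @lossmax_1_ge R p.+2 A hA (negbT hc).
  have := @lossmax_1_le R p.+3 B1 hB1 cB1.
  lra.
- case=> [|[|[|p]]] // _.
  exists (@inst1 R p.+3).
  move=> A [[hA om] [_ o1]].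
  have h3 : (3 : R) <= p.+3%:R by rewrite ler_nat.
  case hc: (c2 \in A).
    have := o1 B0 hB0.
    have := @loss1max_1_ge R p.+3 A hA hc.
    have := @loss1max_1_le R p.+2 B0 hB0 cB0.
    lra.
  have := om B1 hB1.
  have := @lossmax_1_ge R p.+2 A hA (negbT hc).
  have := @lossmax_1_le R p.+3 B1 hB1 cB1.
  lra.
- case=> [|[|p]] // _.
  exists (@inst3 R p.+2); split; first by exists ord0.
  move=> A [[hA o1] [_ om]].
  case hc: (c2 \in A).
    have := o1 B0 hB0; rewrite !loss1_3 // ?hB0 // hc (negbTE cB0); lra.
  have := om B1 hB1.
  have := @loss1max_3_ge R p A hA (negbT hc).
  have := @loss1max_3_le R p B1 hB1 cB1.
  lra.
- exists (@inst1 R 2); split; first by [].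
  exists B0 => -[h _].
  have [_ om] : optimal (@inst1 R 2) (lossmax (@inst1 R 2)) B0.
    apply: h; split; first exact: hB0.
    move=> B hB; rewrite !loss1_1 // ?hB0 // (negbTE cB0); case: (c2 \in B) => //.
  have := om B1 hB1.
  have := @lossmax_1_ge R 1 B0 hB0 cB0.
  have := @lossmax_1_le R 2 B1 hB1 cB1.
  lra.
Qed.
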